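(* Let $n$ be a positive integer. Let $V_n\subseteq T_n$ be the set of triples $(A,B,C)\in T_n$ such that $C$ has at least one point strictly below the horizontal axis and either $B$ ends with an up step or $B$ is empty. Let $D_n^-\subseteq D_n$ be the set of pairs $(H,X)\in D_n$ in which $X$ is strictly below the horizontal axis. Define $t:V_n\to D_n^-$ as follows: for $(A,B,C)\in V_n$, let $K$ be the leftmost point of $C$ of minimal height, let $K$ cut $C$ into a left part $C_1$ and a right part $C_2$, and set $t(A,B,C)=(H,X)$, where $H$ is the concatenation of $C_1$, $A$, $B$, $C_2$ (in this order) and $X$ is the point of $H$ where $A$ ends and $B$ begins. Then $t$ is a bijection from $V_n$ onto $D_n^-$.
   Context: A lattice path here is a finite (possibly empty) sequence of steps, each an up step $(1,1)$ or a down step $(1,-1)$, drawn as a polygonal line from a given starting lattice point; its lattice points are its starting point and the endpoints of its steps; the height of a point is its vertical coordinate. $T_n$ is the set of ordered triples $(A,B,C)$ of lattice paths such that for some nonnegative integers $i,j,k$ with $i+j+k=n$, $A$ has $i$ up and $i$ down steps, $B$ has $j$ up and $j$ down steps, and $C$ has $k$ up and $k$ down steps; each of $A,B,C$ is regarded as drawn starting (and hence ending) on the horizontal axis, and statements about heights of points of $C$ or of $C$ being above/below the axis refer to this drawing. $D_n$ is the set of pairs $(H,X)$ where $H$ is a lattice path with $n$ up steps and $n$ down steps drawn from $(0,0)$ to $(2n,0)$ and $X$ is one of the $2n+1$ lattice points of $H$. Concatenation of paths means drawing them successively, each starting at the endpoint of the preceding one, the first starting at $(0,0)$. *)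

(* Defs.v *)
From mathcomp Require Import all_boot all_order all_algebra.
Set Implicit Arguments. Unset Strict Implicit. Unset Printing Implicit Defensive.
Import Order.TTheory GRing.Theory Num.Theory.
Local Open Scope ring_scope.

(* A lattice path is a sequence of steps: true = up step (1,1), false = down step (1,-1). *)
Definition lpath := seq bool.

Definition ht (s : lpath) : int := (count id s)%:Z - (count negb s)%:Z.

Definition pt_ht (s : lpath) (i : nat) : int := ht (take i s).

Definition balanced (s : lpath) : bool := count id s == count negb s.

(* T_n : triples (A,B,C) with i,j,k up/down steps, i+j+k = n *)
Definition inT (n : nat) (v : lpath * lpath * lpath) : bool :=
  let: (A, B, C) := v in
  [&& balanced A, balanced B, balanced C & (size A + size B + size C == 2 * n)%N].

Definition has_below (C : lpath) : bool :=
  has (fun i => pt_ht C i < 0) (iota 0 (size C).+1).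

Definition inV (n : nat) (v : lpath * lpath * lpath) : bool :=
  let: (A, B, C) := v in
  [&& inT n v, has_below C & ((B == [::]) || last false B)].

(* D_n : pairs (H, x), H a path with n up and n down steps, x the index of
   one of its 2n+1 lattice points (the point after x steps). *)
Definition inD (n : nat) (d : lpath * nat) : bool :=
  let: (H, x) := d in [&& balanced H, size H == (2 * n)%N & (x <= 2 * n)%N].

Definition inDminus (n : nat) (d : lpath * nat) : bool :=
  let: (H, x) := d in inD n d && (pt_ht H x < 0).

Definition min_ht (C : lpath) : int :=
  foldr Num.min 0 [seq pt_ht C i | i <- iota 0 (size C).+1].

Definition kpos (C : lpath) : nat :=
  find (fun i => pt_ht C i == min_ht C) (iota 0 (size C).+1).

Definition tmap (v : lpath * lpath * lpath) : lpath * nat :=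
  let: (A, B, C) := v in
  let k := kpos C in
  (take k C ++ A ++ B ++ drop k C, (k + size A)%N).

(* Main.v *)
Require Import Defs.
From mathcomp Require Import all_boot all_order all_algebra zify.
Import Order.TTheory GRing.Theory Num.Theory.
Local Open Scope ring_scope.

Definition step (b : bool) : int := if b then 1 else -1.

Lemma ht_nil : ht [::] = 0. Proof. by []. Qed.
Lemma ht_cat s t : ht (s ++ t) = ht s + ht t.
Proof. rewrite /ht !count_cat; lia. Qed.
Lemma ht_seq1 b : ht [:: b] = step b.
Proof. by case: b. Qed.
Lemma ht_rcons s b : ht (rcons s b) = ht s + step b.
Proof. by rewrite -cats1 ht_cat ht_seq1. Qed.
Lemma balancedE s : balanced s = (ht s == 0).
Proof. rewrite /balanced /ht subr_eq0; apply/eqP/eqP; lia. Qed.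

Lemma pt0 s : pt_ht s 0 = 0. Proof. by rewrite /pt_ht take0. Qed.
Lemma pt_over s i : (size s <= i)%N -> pt_ht s i = ht s.
Proof. by move=> h; rewrite /pt_ht take_oversize. Qed.
Lemma pt_catl s t i : (i <= size s)%N -> pt_ht (s ++ t) i = pt_ht s i.
Proof.
move=> h; rewrite /pt_ht take_cat; case: ltnP => // h2.
have -> : i = size s by apply/eqP; rewrite eqn_leq h h2.
by rewrite subnn take0 cats0 take_size.
Qed.
Lemma pt_catr s t i : pt_ht (s ++ t) (size s + i) = ht s + pt_ht t i.
Proof.
rewrite /pt_ht take_cat ltnNge leq_addr /= addKn ht_cat //.
Qed.
Lemma pt_S s i : pt_ht s i.+1 = pt_ht s i + (if (i < size s)%N then step (nth true s i) else 0).
Proof.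
case: ltnP => h.
  by rewrite /pt_ht (take_nth true h) ht_rcons.
by rewrite !pt_over // ?addr0 // (leq_trans h).
Qed.
Lemma pt_S_ge s i : pt_ht s i - 1 <= pt_ht s i.+1.
Proof. rewrite pt_S; case: ltnP => _; [case: nth => /=|]; lia. Qed.
Lemma pt_S_le s i : pt_ht s i.+1 <= pt_ht s i + 1.
Proof. rewrite pt_S; case: ltnP => _; [case: nth => /=|]; lia. Qed.
Lemma foldr_le (l : seq int) x : x \in l -> foldr Num.min 0 l <= x.
Proof.
elim: l => //= y l IH; rewrite inE => /orP [/eqP ->|h].
  by rewrite ge_min lexx.
by rewrite ge_min IH ?orbT.
Qed.
Lemma foldr_ge (l : seq int) m : m <= 0 -> (forall x, x \in l -> m <= x) -> m <= foldr Num.min 0 l.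
Proof.
move=> h0; elim: l => //= y l IH H.
rewrite le_min H ?mem_head //= IH // => x hx; apply: H; by rewrite inE hx orbT.
Qed.
Lemma foldr_mem (l : seq int) : foldr Num.min 0 l \in 0 :: l.
Proof.
elim: l => [|y l IH] /=; first by rewrite mem_head.
rewrite /Num.min; case: ifP => _; first by rewrite !inE eqxx orbT.
move: IH; rewrite !inE => /orP [->|->] //; by rewrite ?orbT.
Qed.

Lemma min_ht_le C i : min_ht C <= pt_ht C i.
Proof.
case: (leqP i (size C)) => h.
  apply: foldr_le; apply/mapP; exists i => //; by rewrite mem_iota.
rewrite pt_over ?(ltnW h) //; rewrite -(@pt_over C (size C)) //.
apply: foldr_le; apply/mapP; exists (size C); rewrite ?mem_iota ?ltnSn //.
Qed.
Lemma min_ht_ex C : exists2 i, (i <= size C)%N & pt_ht C i = min_ht C.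
Proof.
have := foldr_mem [seq pt_ht C i | i <- iota 0 (size C).+1].
rewrite inE => /orP [/eqP h|/mapP [i]]; first by exists 0%N; rewrite ?pt0 // /min_ht -h.
rewrite mem_iota => /andP [_ hi] e; exists i; by rewrite // /min_ht e.
Qed.
Lemma min_ht_eq C m : (forall i, m <= pt_ht C i) -> (exists i, pt_ht C i = m) -> min_ht C = m.
Proof.
move=> H [i hi]; apply/eqP; rewrite eq_le; apply/andP; split.
  by rewrite -hi min_ht_le.
apply: foldr_ge; first by rewrite -(pt0 C) H.
by move=> x /mapP [j _ ->].
Qed.

Lemma kpos_spec C : [/\ (kpos C <= size C)%N, pt_ht C (kpos C) = min_ht C &
   forall i, (i < kpos C)%N -> pt_ht C i != min_ht C].
Proof.
have hh : has (fun i => pt_ht C i == min_ht C) (iota 0 (size C).+1).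
  case: (min_ht_ex C) => i hi e; apply/hasP; exists i; by rewrite ?mem_iota ?e.
have hlt := hh; rewrite has_find size_iota ltnS in hlt.
split => //.
  by have := nth_find 0%N hh; rewrite nth_iota ?ltnS // add0n => /eqP.
move=> i hi; have := before_find 0%N hi.
have hi2 : (i < (size C).+1)%N by apply: (leq_trans hi); rewrite ltnW // ltnS.
by rewrite nth_iota // add0n => ->.
Qed.

Lemma kpos_eq C k : (k <= size C)%N -> (forall i, pt_ht C k <= pt_ht C i) ->
  (forall i, (i < k)%N -> pt_ht C k < pt_ht C i) -> kpos C = k.
Proof.
move=> hk H1 H2.
have hm : min_ht C = pt_ht C k by apply: min_ht_eq => //; exists k.
case: (kpos_spec C); rewrite hm => h1 h2 h3.
case: (ltngtP (kpos C) k) => // h.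
  by have := H2 _ h; rewrite h2 ltxx.
by have := h3 _ h; rewrite eqxx.
Qed.
Lemma pt_cat_size s t : pt_ht (s ++ t) (size s) = ht s.
Proof. by rewrite -[size s]addn0 pt_catr pt0 addr0. Qed.
Lemma pt_size s : pt_ht s (size s) = ht s.
Proof. by rewrite pt_over. Qed.

Definition Pk H x k := pt_ht H k = pt_ht H x /\ forall i, (i < k)%N -> pt_ht H i != pt_ht H x.
Definition Pj H x j := [/\ (x <= j)%N, forall l, (j <= l)%N -> pt_ht H x <= pt_ht H l &
  forall i, (x <= i < j)%N -> exists2 l, (i <= l)%N & pt_ht H l < pt_ht H x].

Lemma Pk_uniq H x k1 k2 : Pk H x k1 -> Pk H x k2 -> k1 = k2.
Proof.
move=> [e1 n1] [e2 n2]; case: (ltngtP k1 k2) => // h.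
  by have := n2 _ h; rewrite e1 eqxx.
by have := n1 _ h; rewrite e2 eqxx.
Qed.
Lemma Pj_uniq H x j1 j2 : Pj H x j1 -> Pj H x j2 -> j1 = j2.
Proof.
move=> [a1 b1 c1] [a2 b2 c2]; case: (ltngtP j1 j2) => // h.
  have [l hl hlt] := c2 j1 (introT andP (conj a1 h)).
  by have := b1 l hl; rewrite leNgt hlt.
have [l hl hlt] := c1 j2 (introT andP (conj a2 h)).
by have := b2 l hl; rewrite leNgt hlt.
Qed.

Definition dec (H : lpath) x k j : lpath * lpath * lpath :=
  (take (x - k)%N (drop k H), take (j - x)%N (drop x H), take k H ++ drop j H).

Lemma lastP_true (B : lpath) : (B == [::]) || last false B -> B != [::] -> exists B', B = rcons B' true.
Proof.
case/lastP: B => [|B' b] //= ; rewrite last_rcons => /orP [/eqP e|hb] _.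
  by case: B' e.
by exists B'; rewrite hb.
Qed.

Lemma V_lemma n A B C : inV n (A, B, C) ->
  let k := kpos C in
  let H := take k C ++ A ++ B ++ drop k C in
  let x := (k + size A)%N in
  [/\ Pk H x k, Pj H x (x + size B), dec H x k (x + size B) = (A, B, C) & inDminus n (H, x)].
Proof.
move=> /and3P [/and4P [bA bB bC hs] hb hlast].
rewrite !balancedE in bA bB bC; move/eqP: bA => bA; move/eqP: bB => bB; move/eqP: bC => bC.
have hBr := @lastP_true B hlast.
case: (kpos_spec C) => hk hkm hkb.
have hmin := min_ht_le C.
have hmlt : min_ht C < 0.
  case/hasP: hb => i _ hi; exact: le_lt_trans (hmin i) hi.
move: hk hkm hkb hmin hmlt.
set k := kpos C; set m := min_ht C; clearbody k m.
move=> hk hkm hkb hmin hmlt.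
have eC : C = take k C ++ drop k C by rewrite cat_take_drop.
have sC1 : size (take k C) = k by rewrite size_takel.
move: eC sC1; set C1 := take k C; set C2 := drop k C; clearbody C1 C2 => eC sC1.
subst C.
have htC1 : ht C1 = m by rewrite -hkm pt_catl ?sC1 // -sC1 pt_size.
have htC2 : ht C2 = - m by move: bC; rewrite ht_cat htC1; clear; lia.
move=> /=; rewrite take_size_cat // drop_size_cat //.
have ptC : forall t, pt_ht (C1 ++ C2) (k + t) = m + pt_ht C2 t.
  by move=> t; rewrite -sC1 pt_catr htC1.
have ptH1 : forall i, (i <= k)%N -> pt_ht (C1 ++ A ++ B ++ C2) i = pt_ht (C1 ++ C2) i.
  by move=> i hi; rewrite !pt_catl ?sC1.
have ptHx : pt_ht (C1 ++ A ++ B ++ C2) (k + size A) = m.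
  by rewrite -sC1 pt_catr pt_cat_size htC1 bA addr0.
have ptHj : forall t, pt_ht (C1 ++ A ++ B ++ C2) (k + size A + size B + t) = m + pt_ht C2 t.
  by move=> t; rewrite -sC1 -!addnA pt_catr pt_catr pt_catr htC1 bA bB !add0r.
split.
- split; rewrite ptHx; first by rewrite ptH1.
  by move=> i hi; rewrite ptH1 ?hkb // ltnW.
- split; first by rewrite leq_addr.
  + move=> l hl; rewrite -(subnKC hl) ptHj ptHx; have := hmin (k + (l - (k + size A + size B)))%N.
    by rewrite ptC; clear; lia.
  + move=> i /andP [hi1 hi2].
    have hBn : B != [::] by apply/eqP => e; move: hi1 hi2; rewrite e addn0; case: ltngtP.
    have [B' eB] := hBr hBn.
    exists (k + size A + size B')%N.
      by move: hi2; rewrite eB size_rcons addnS ltnS.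
    rewrite ptHx -sC1 -addnA pt_catr pt_catr eB cat_rcons pt_cat_size htC1.
    move: bB; rewrite eB ht_rcons bA /=; clear; lia.
- rewrite /dec.
  have -> : (k + size A - k = size A)%N by rewrite addKn.
  have -> : (k + size A + size B - (k + size A) = size B)%N by rewrite addKn.
  rewrite drop_size_cat // take_size_cat //.
  rewrite catA drop_size_cat ?size_cat ?sC1 // take_size_cat //.
  by rewrite -catA take_size_cat // !catA drop_size_cat // !size_cat sC1.
- apply/andP; split; last by rewrite ptHx.
  apply/and3P; split.
  + by rewrite balancedE !ht_cat htC1 htC2 bA bB !add0r subrr.
  + move/eqP: hs; rewrite !size_cat => hs; apply/eqP; move: hs sC1; clear; lia.
  + move/eqP: hs; rewrite !size_cat => hs; move: hs sC1; clear; lia.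
Qed.
Lemma D_lemma n H x : inDminus n (H, x) -> exists2 v, inV n v & tmap v = (H, x).
Proof.
move=> /andP [/and3P [bH sH hx] hneg].
rewrite balancedE in bH; move/eqP: bH => bH; move/eqP: sH => sH.
move: hneg; set h := pt_ht H x => hneg.
have hh : pt_ht H x = h by [].
clearbody h.
have exk : exists i, pt_ht H i == h by exists x; rewrite hh.
case: (ex_minnP exk) => k /eqP hk kmin.
have kx : (k <= x)%N by apply: kmin; rewrite hh.
have kgt : forall i, (i < k)%N -> h < pt_ht H i.
  elim=> [|i IH] hi; first by rewrite pt0.
  have h1 := IH (ltnW hi); have h2 := pt_S_ge H i.
  have hne : pt_ht H i.+1 != h.
    by apply/negP => /eqP e; have := kmin _ (introT eqP e); rewrite leqNgt hi.
  move/eqP: hne => hne; move: h1 h2 hne; clear; lia.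
pose ok i := all (fun l => h <= pt_ht H l) (iota i (size H).+1).
have okP : forall i, ok i -> forall l, (i <= l)%N -> h <= pt_ht H l.
  move=> i /allP hi l hl; case: (leqP l (i + size H)) => hl2.
    by apply: hi; rewrite mem_iota hl /= addnS ltnS.
  rewrite pt_over ?bH ?ltW //; apply: leq_trans (ltnW hl2); exact: leq_addl.
have exj : exists i, (x <= i)%N && ok i.
  exists (size H); rewrite sH hx /=; apply/allP => l; rewrite mem_iota => /andP [hl _].
  by rewrite pt_over; [rewrite bH ltW | rewrite sH].
case: (ex_minnP exj) => j /andP [xj okj] jmin.
have jle : (j <= size H)%N.
  apply: jmin; rewrite sH hx /=; apply/allP => l; rewrite mem_iota => /andP [hl _].
  by rewrite pt_over; [rewrite bH ltW | rewrite sH].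
have okj' := okP j okj.
have notok : forall i, (x <= i < j)%N -> exists2 l, (i <= l)%N & pt_ht H l < h.
  move=> i /andP [h1 h2]; case okb: (ok i).
    by have := jmin i; rewrite h1 okb => /(_ isT); rewrite leqNgt h2.
  move/negbT: okb => /allPn [l hl hlt]; exists l; last by rewrite ltNge.
  by move: hl; rewrite mem_iota => /andP [].
have hj : pt_ht H j = h /\ ((x < j)%N -> (j.-1 < size H)%N /\ nth false H j.-1 = true).
  case: (ltngtP x j) xj => // [xltj|<-] _; last by split.
  case: j xltj jmin okj okj' notok jle => // j' xltj jmin okj okj' notok jle /=.
  rewrite ltnS in xltj.
  have [l hl hlt] := notok j' (introT andP (conj xltj (ltnSn _))).
  have el : l = j'.
    apply/eqP; rewrite eqn_leq hl andbT; rewrite leqNgt; apply/negP => hl2.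
    by have := okj' l hl2; rewrite leNgt hlt.
  subst l; have := pt_S H j'; rewrite jle.
  rewrite (set_nth_default true) //.
  have := okj' j'.+1 (leqnn _).
  move: hlt; case: (nth true H j') => /=; clear; lia.
have e1 : drop k H = take (x - k) (drop k H) ++ drop x H.
  by rewrite -{1}(cat_take_drop (x - k) (drop k H)) drop_drop subnK.
have e2 : drop x H = take (j - x) (drop x H) ++ drop j H.
  by rewrite -{1}(cat_take_drop (j - x) (drop x H)) drop_drop subnK.
have eH : H = take k H ++ take (x - k) (drop k H) ++ take (j - x) (drop x H) ++ drop j H.
  by rewrite -e2 -e1 cat_take_drop.
have sC1 : size (take k H) = k by rewrite size_takel // (leq_trans kx) // sH.
have sA : size (take (x - k) (drop k H)) = (x - k)%N.
  by rewrite size_takel // size_drop leq_sub2r // sH.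
have sB : size (take (j - x) (drop x H)) = (j - x)%N.
  by rewrite size_takel // size_drop leq_sub2r.
have hBl : (take (j - x) (drop x H) == [::]) || last false (take (j - x) (drop x H)).
  case: (ltngtP x j) xj => // [xltj|<-] _; last by rewrite subnn take0.
  have [hlt hn] := hj.2 xltj.
  have hj1 : j = j.-1.+1 by rewrite prednK // (leq_ltn_trans _ xltj).
  have hxj : (x <= j.-1)%N by rewrite -ltnS -hj1.
  have -> : (j - x = (j.-1 - x).+1)%N by rewrite {1}hj1 subSn.
  rewrite (take_nth false) ?last_rcons ?nth_drop ?subnKC ?hn ?orbT //.
  by rewrite size_drop; move: hlt hxj; clear; lia.
have hjh := hj.1.
clear ok okP okj jmin notok exk exj e1 e2 hj kmin.
move: eH sC1 sA sB hBl.
set C1 := take k H; set A := take (x - k) (drop k H); set B := take (j - x) (drop x H); set C2 := drop j H.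
clearbody C1 A B C2 => eH sC1 sA sB hBl.
have ex : x = (k + size A)%N by rewrite sA subnKC.
have ej : j = (k + size A + size B)%N by rewrite sB -ex subnKC.
subst H x j.
have htC1 : ht C1 = h by rewrite -hk -sC1 pt_cat_size.
have htA : ht A = 0 by move: hh; rewrite -sC1 pt_catr pt_cat_size htC1; clear; lia.
have htB : ht B = 0.
  by move: hjh; rewrite -sC1 -addnA pt_catr pt_catr pt_cat_size htC1 htA; clear; lia.
have htC2 : ht C2 = - h by move: bH; rewrite !ht_cat htC1 htA htB; clear; lia.
have ptHj : forall t, pt_ht (C1 ++ A ++ B ++ C2) (k + size A + size B + t) = h + pt_ht C2 t.
  by move=> t; rewrite -sC1 -!addnA pt_catr pt_catr pt_catr htC1 htA htB !add0r.
have ptC : forall t, pt_ht (C1 ++ C2) (k + t) = h + pt_ht C2 t.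
  by move=> t; rewrite -sC1 pt_catr htC1.
have ptCl : forall i, (i <= k)%N -> pt_ht (C1 ++ C2) i = pt_ht (C1 ++ A ++ B ++ C2) i.
  by move=> i hi; rewrite !pt_catl ?sC1.
have ptCk : pt_ht (C1 ++ C2) k = h by rewrite ptCl.
have kp : kpos (C1 ++ C2) = k.
  apply: kpos_eq.
  - by rewrite size_cat sC1 leq_addr.
  - move=> i; rewrite ptCk; case: (leqP i k) => hi.
      rewrite ptCl //; case: (ltngtP i k) hi => // [hik|->] _; last by rewrite hk.
      exact: ltW (kgt _ hik).
    rewrite -(subnKC (ltnW hi)) ptC.
    have := okj' (k + size A + size B + (i - k))%N (leq_addr _ _).
    rewrite ptHj; clear; lia.
  - by move=> i hi; rewrite ptCk ptCl ?kgt // ltnW.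
exists (A, B, C1 ++ C2); last first.
  by rewrite /tmap kp take_size_cat // drop_size_cat.
apply/and3P; split.
- apply/and4P; split.
  + by rewrite balancedE htA.
  + by rewrite balancedE htB.
  + by rewrite balancedE ht_cat htC1 htC2 subrr.
  + by move: sH; rewrite !size_cat => <-; apply/eqP; clear; lia.
- apply/hasP; exists k; last by rewrite ptCk.
  by rewrite mem_iota /= ltnS size_cat sC1 leq_addr.
- exact: hBl.
Qed.
Local Close Scope ring_scope.
Theorem lemma3 (n : nat) (hn : (0 < n)%N) :
  (forall v, inV n v -> inDminus n (tmap v)) /\
  {in inV n &, injective tmap} /\
  (forall d, inDminus n d -> exists2 v, inV n v & tmap v = d).
Proof.
split; [|split].
- by move=> [[A B] C] hv; case: (@V_lemma _ _ _ _ hv).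
- move=> [[A1 B1] C1] [[A2 B2] C2] h1 h2 e.
  case: (@V_lemma _ _ _ _ h1) => pk1 pj1 d1 _.
  case: (@V_lemma _ _ _ _ h2) => pk2 pj2 d2 _.
  rewrite /tmap in e; case: e => eH ex.
  rewrite eH ex in pk1 pj1 d1.
  have ek := @Pk_uniq _ _ _ _ pk1 pk2.
  rewrite ek in pj1 d1.
  have ej := @Pj_uniq _ _ _ _ pj1 pj2.
  by rewrite -d1 -d2 ej.
- move=> [H x]; exact: D_lemma.
Qed.
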